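(* Let $\alpha\in(0,1)$ and $0\le W_0\le \alpha$. Consider a monotone GAI++ rule as defined in the context, applied to $p$-values $P_1,P_2,\dots$ satisfying the independence and super-uniformity assumptions of the context. Then for every $T\in\mathbb N$, $$\mathbb E\left[\frac{V(T)+W(T)}{R(T)\vee 1}\right]\le \alpha .$$ Consequently, since $W(T)\ge 0$, $\mathrm{FDR}(T)=\mathbb E\big[V(T)/(R(T)\vee 1)\big]\le\alpha$ for all $T\in\mathbb N$.
   Context: Online testing setup: $p$-values $P_1,P_2,\dots\in[0,1]$ arrive one at a time, $P_t$ corresponding to hypothesis $H_t$. Let $\mathcal H^0\subseteq\mathbb N$ be the (fixed, unknown) set of indices of true null hypotheses. Super-uniformity: for every $t\in\mathcal H^0$, $\mathbb P(P_t\le x)\le x$ for all $x\in[0,1]$. Independence: for each $t\in\mathcal H^0$, $P_t$ is independent of $(P_s)_{s\ne t}$. Decisions are $R_t=\mathbf 1\{P_t\le\alpha_t\}$, and $\mathcal F^t=\sigma(R_1,\dots,R_t)$. A quantity indexed by $t$ is predictable if it is $\mathcal F^{t-1}$-measurable. Let $R(T)=\sum_{t=1}^T R_t$, $V(T)=\sum_{t\le T,\,t\in\mathcal H^0}R_t$. GAI++ rule: start with wealth $W(0)=W_0$ with $0\le W_0\le\alpha$. At each $t$, predictable quantities $\alpha_t\ge 0$ (test level), $\phi_t$ (penalty) and $\psi_t$ (reward) are chosen, with $\phi_t\le W(t-1)$, and the wealth is updated as $W(t)=W(t-1)-\phi_t+R_t\psi_t$; the choices are such that $W(t)\ge 0$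 for all $t$. The reward must satisfy $$\psi_t\le\min\Big\{\phi_t+b_t,\ \frac{\phi_t}{\alpha_t}+b_t-1\Big\},\qquad b_t=\begin{cases}\alpha-W_0 & \text{if } R(t-1)=0,\\ \alpha&\text{otherwise},\end{cases}$$ (with $\phi_t/\alpha_t$ interpreted as $+\infty$ if $\alpha_t=0$). The rule is monotone if $\alpha_t=f_t(R_1,\dots,R_{t-1})$ for a function $f_t:\{0,1\}^{t-1}\to[0,\infty)$ that is coordinatewise nondecreasing. *)

(* Defs.v *)
From HB Require Import structures.
From mathcomp Require Import all_boot all_order all_algebra.
From mathcomp Require Import all_classical all_reals all_analysis.
Set Implicit Arguments. Unset Strict Implicit. Unset Printing Implicit Defensive.
Import Order.TTheory GRing.Theory Num.Theory.
Local Open Scope classical_set_scope.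
Local Open Scope ring_scope.

Section gai.
Variables (d : measure_display) (Omega : measurableType d) (R : realType).

(* Independence of the random variable [p t] from the family (p s)_{s <> t}:
   sigma(p t) is independent of sigma(p s, s <> t); written out on the
   generating pi-system of finite-dimensional cylinder events. *)
Definition indep_from_others (P : probability Omega R) (p : nat -> Omega -> R)
  (t : nat) : Prop :=
  forall (S : seq nat) (A : set R) (B : nat -> set R),
    t \notin S -> measurable A -> (forall s, measurable (B s)) ->
    P (p t @^-1` A `&` \bigcap_(s in [set` S]) (p s @^-1` B s)) =
    (P (p t @^-1` A) * P (\bigcap_(s in [set` S]) (p s @^-1` B s)))%E.

Definition super_uniform (P : probability Omega R) (X : Omega -> R) : Prop :=
  forall x : R, 0 <= x <= 1 -> (P [set w | (X w <= x)%R] <= x%:E)%E.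

(* The rule: [alpha t h], [phi t h], [psi t h] are the test level, penalty and
   reward at time t >= 1, as functions of the history h = [:: R_1; ...; R_{t-1}]
   (predictable quantities). *)
Variables (alpha phi psi : nat -> seq bool -> R) (W0 : R) (p : nat -> Omega -> R).

Fixpoint hist (w : Omega) (t : nat) : seq bool :=
  match t with
  | 0 => [::]
  | t'.+1 => rcons (hist w t') (p t'.+1 w <= alpha t'.+1 (hist w t'))
  end.

Definition dec (w : Omega) (t : nat) : bool := nth false (hist w t) t.-1.

Definition nrej (w : Omega) (T : nat) : nat := count id (hist w T).

Definition nfalse (H0 : pred nat) (w : Omega) (T : nat) : nat :=
  \sum_(1 <= t < T.+1 | H0 t) dec w t.

Fixpoint wealth (w : Omega) (t : nat) : R :=
  match t with
  | 0 => W0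
  | t'.+1 => wealth w t' - phi t'.+1 (hist w t')
             + (dec w t'.+1)%:R * psi t'.+1 (hist w t')
  end.

End gai.

Definition bt {R : realType} (alpha W0 : R) (Rprev : nat) : R :=
  if Rprev == 0%N then alpha - W0 else alpha.

Definition hist_le (h h' : seq bool) : bool :=
  (size h == size h') && all2 (fun a b => a ==> b) h h'.

(* Main.v *)
Require Import Defs.
From HB Require Import structures.
From mathcomp Require Import all_boot all_order all_algebra.
From mathcomp Require Import all_classical all_reals all_analysis.
From mathcomp Require Import ring lra measurable_realfun.
Import Order.TTheory GRing.Theory Num.Theory.
Local Open Scope classical_set_scope.
Local Open Scope ring_scope.

Set Implicit Arguments. Unset Strict Implicit.



Section H.
Variables (R : realType) (d : measure_display) (Omega : measurableType d).
Variables (p : nat -> Omega -> R) (a : nat -> seq bool -> R).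

Lemma size_hist w t : size (hist a p w t) = t.
Proof. by elim: t => //= t IH; rewrite size_rcons IH. Qed.

Lemma hist_take w t T : (t <= T)%N -> take t (hist a p w T) = hist a p w t.
Proof.
elim: T => [|T IH]; first by rewrite leqn0 => /eqP ->.
rewrite leq_eqVlt => /orP[/eqP ->|]; first by rewrite take_oversize // size_hist.
rewrite ltnS => tT /=; rewrite -cats1 take_cat size_hist.
move: tT; rewrite leq_eqVlt => /orP[/eqP ->|tT]; first by rewrite ltnn subnn take0 cats0.
by rewrite tT IH // ltnW.
Qed.

Lemma nth_hist w s T : (s < T)%N ->
  nth false (hist a p w T) s = (p s.+1 w <= a s.+1 (hist a p w s)).
Proof.
move=> sT; rewrite -(nth_take _ (ltnSn s)) hist_take //=.
by rewrite nth_rcons size_hist ltnn eqxx.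
Qed.

Lemma hist_char w T (h : seq bool) : size h = T ->
  hist a p w T = h <-> (forall s, (s < T)%N ->
     (p s.+1 w <= a s.+1 (take s h)) = nth false h s).
Proof.
move=> sh; split.
  by move=> <- s sT; rewrite nth_hist // hist_take // ltnW.
elim: T h sh => [|T IH] h sh H; first by case: h sh H.
case/lastP: h sh H => [//|h b]; rewrite size_rcons => -[sh] H /=.
have Hh : hist a p w T = h.
  apply: IH => // s sT; have := H s (ltnW sT).
  by rewrite -cats1 take_cat nth_cat sh sT.
rewrite Hh; congr rcons; have := H T (ltnSn T).
by rewrite -cats1 take_cat nth_cat sh ltnn subnn take0 cats0.
Qed.

End H.



Section M.
Variables (R : realType) (d : measure_display) (Omega : measurableType d).
Variables (P : probability Omega R) (p : nat -> Omega -> R).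
Hypothesis mp : forall t, measurable_fun setT (p t).

Definition Aset a T (h : seq bool) := [set w | hist a p w T = h].
Definition Pr a T h := fine (P (Aset a T h)).
Definition Ex a T (F : seq bool -> R) :=
  \sum_(h : T.-tuple bool) F (tval h) * Pr a T h.

Lemma meas_le s c (b : bool) : measurable [set w | (p s w <= c) = b].
Proof.
have m1 : measurable [set w | p s w <= c].
  have := measurable_fun_le measurableT (mp s) (measurable_cst c).
  by rewrite setTI.
case: b.
  have -> : [set w | (p s w <= c) = true] = [set w | p s w <= c] by [].
  exact: m1.
have -> : [set w | (p s w <= c) = false] = ~` [set w | p s w <= c].
  apply/seteqP; split => w /=; first by move=> ->.
  by move/negP/negbTE.
exact: measurableC.
Qed.

Lemma meas_A a T h : measurable (Aset a T h).
Proof.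
have [sh|sh] := eqVneq (size h) T; last first.
  rewrite (_ : Aset a T h = set0); first exact: measurable0.
  apply/seteqP; split => w //= hw; move: sh; by rewrite -hw size_hist eqxx.
rewrite (_ : Aset a T h = \bigcap_(s : nat) (if (s < T)%N then
    [set w | (p s.+1 w <= a s.+1 (take s h)) = nth false h s] else setT)).
  by apply: bigcapT_measurable => s; case: ifP => _ //; exact: meas_le.
apply/seteqP; split => w /=.
  by move/(hist_char _ _ _ sh) => H s _; case: ifP => // sT; exact: H.
by move=> H; apply/(hist_char _ _ _ sh) => s sT; have := H s I; rewrite sT.
Qed.

Lemma hist_sum a T w (F : seq bool -> R) :
  F (hist a p w T) = \sum_(h : T.-tuple bool) F h * \1_(Aset a T h) w.
Proof.
pose h0 : T.-tuple bool := @Tuple T bool (hist a p w T) (introT eqP (size_hist _ _ _ _)).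
rewrite (bigD1 h0) //= big1 ?addr0.
  by rewrite indicE mem_set ?mulr1.
move=> h hh0; rewrite indicE memNset ?mulr0 //= => hw.
by move/eqP: hh0; apply; apply: val_inj; rewrite /= hw.
Qed.

Lemma meas_histF a T (F : seq bool -> R) :
  measurable_fun setT (fun w => (F (hist a p w T))%:E).
Proof.
apply/measurable_EFinP.
rewrite (_ : (fun w => F (hist a p w T)) = fun w => \sum_(h : T.-tuple bool) F h * \1_(Aset a T h) w).
  apply: measurable_sum => h; apply: measurable_funM; first exact: measurable_cst.
  exact/measurable_indic/meas_A.
by apply/funext => w /=; rewrite -hist_sum.
Qed.

Lemma E_hist a T (F : seq bool -> R) : (forall h : T.-tuple bool, 0 <= F h) ->
  (\int[P]_w (F (hist a p w T))%:E = (Ex a T F)%:E)%E.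
Proof.
move=> F0.
under eq_integral do rewrite hist_sum -sumEFin.
rewrite ge0_integral_sum //; last first.
- by move=> h w _; rewrite lee_fin mulr_ge0.
- move=> h; apply/measurable_EFinP; apply: measurable_funM.
    exact: measurable_cst.
  exact/measurable_indic/meas_A.
rewrite /Ex -sumEFin; apply: eq_bigr => h _.
rewrite (integralZl_indic _ (fun _ => Aset a T h)) //; last exact: meas_A.
- rewrite integral_indic //; last exact: meas_A.
  have -> : Aset a T h `&` [set: Omega] = Aset a T h.
    by apply/seteqP; split=> w //= [].
  by rewrite /Pr EFinM fineK //; apply: fin_num_measure; exact: meas_A.
- by move=> /lt_geF; rewrite F0.
Qed.

Lemma Pr_ge0 a T h : 0 <= Pr a T h.
Proof. exact: fine_ge0. Qed.

Lemma Pr_reach a T h : Pr a T h != 0 -> exists w, hist a p w T = h.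
Proof.
apply: contra_neqP => /forallNP H; rewrite /Pr (_ : Aset a T h = set0) ?measure0 //.
by apply/seteqP; split => w //= hw; apply: (H w).
Qed.

Lemma Ex_le a T F G : (forall w, F (hist a p w T) <= G (hist a p w T)) ->
  Ex a T F <= Ex a T G.
Proof.
move=> FG; apply: ler_sum => h _.
have [->|/Pr_reach[w <-]] := eqVneq (Pr a T h) 0; first by rewrite !mulr0.
by apply: ler_wpM2r; [exact: Pr_ge0|exact: FG].
Qed.

Lemma Ex_sum1 a T : Ex a T (fun=> 1) = 1.
Proof.
have := @E_hist a T (fun=> 1) (fun _ => ler01).
rewrite /= integral_cst // mul1e.
move=> H; have H1 := probability_setT P.
by rewrite H in H1; case: H1.
Qed.

Lemma Ex_cmp (a b : nat -> seq bool -> R) T (F G : seq bool -> R) : (forall h : T.-tuple bool, 0 <= F h) ->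
  (forall h : T.-tuple bool, 0 <= G h) ->
  (forall w, F (hist a p w T) <= G (hist b p w T)) -> Ex a T F <= Ex b T G.
Proof.
move=> F0 G0 FG; rewrite -lee_fin -E_hist // -E_hist //.
apply: ge0_le_integral => //.
- move=> w _; rewrite lee_fin.
  pose h0 : T.-tuple bool := @Tuple T bool (hist a p w T) (introT eqP (size_hist _ _ _ _)).
  exact: (F0 h0).
- exact: meas_histF.
- exact: meas_histF.
- by move=> w _; rewrite lee_fin.
Qed.

End M.



Lemma all2_rcons (r : rel bool) x y b c : size x = size y ->
  all2 r (rcons x b) (rcons y c) = all2 r x y && r b c.
Proof.
elim: x y => [|u x IH] [|v y] //=; first by rewrite andbT.
by case=> e; rewrite IH // andbA.
Qed.

Lemma count_hist_le x y : hist_le x y -> (count id x <= count id y)%N.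
Proof.
case/andP => /eqP; elim: x y => [|u x IH] [|v y] //= [e] /andP[uv xy].
by apply: leq_add; [case: u v uv => [] [] | exact: IH].
Qed.

Section K.
Variables (R : realType) (d : measure_display) (Omega : measurableType d).
Variables (P : probability Omega R) (p : nat -> Omega -> R).
Hypothesis mp : forall t, measurable_fun setT (p t).
Hypothesis p01 : forall t w, 0 <= p t w <= 1.
Variable alphat : nat -> seq bool -> R.
Hypothesis a0 : forall t h, size h = t.-1 -> 0 <= alphat t h.
Hypothesis amono : forall t h h', size h = t.-1 -> hist_le h h' ->
  alphat t h <= alphat t h'.
Variable s : nat.
Hypothesis su : super_uniform P (p s.+1).
Hypothesis ind : indep_from_others P p s.+1.

Definition alpha' u x := if u == s.+1 then 1 else alphat u x.

Lemma K1 w u : (u <= s)%N -> hist alpha' p w u = hist alphat p w u.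
Proof.
elim: u => [//|u IH] us /=; rewrite IH ?(ltnW us) // /alpha'.
by rewrite eqSS (ltn_eqF us).
Qed.

Lemma K2 w u : hist_le (hist alphat p w u) (hist alpha' p w u).
Proof.
elim: u => [//|u IH] /=; case/andP: (IH) => /eqP e a2.
rewrite /hist_le !size_rcons e eqxx /= all2_rcons // a2 /= /alpha'.
case: eqP => [_|_]; first by rewrite (andP (p01 u.+1 w)).2 implybT.
apply/implyP => H; apply: le_trans H _; apply: amono => //.
exact: size_hist.
Qed.

Lemma K4 w T : (s < T)%N -> nth false (hist alpha' p w T) s.
Proof. by move=> sT; rewrite nth_hist // /alpha' eqxx (andP (p01 s.+1 w)).2. Qed.

Lemma K5a T h : size h = T -> (s < T)%N -> nth false h s ->
  Aset p alphat T h =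
  [set w | p s.+1 w <= alphat s.+1 (take s h)] `&` Aset p alpha' T h.
Proof.
move=> sh sT hs; apply/seteqP; split => w /=.
  move/(hist_char _ _ _ sh) => H; split; first by rewrite H.
  apply/(hist_char _ _ _ sh) => u uT; rewrite /alpha'.
  case: eqP => [[->]|_]; last exact: H.
  by rewrite hs (andP (p01 s.+1 w)).2.
case=> H1 /(hist_char _ _ _ sh) H2; apply/(hist_char _ _ _ sh) => u uT.
have := H2 u uT; rewrite /alpha'; case: eqP => [[->]|//].
by rewrite H1 hs.
Qed.

Definition Bset h u := [set x : R | (x <= alphat u (take u.-1 h)) = nth false h u.-1].
Definition Sseq T := [seq u <- iota 1 T | u != s.+1].

Lemma K5b T h : size h = T -> (s < T)%N -> nth false h s ->
  Aset p alpha' T h = \bigcap_(u in [set` Sseq T]) (p u @^-1` Bset h u).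
Proof.
move=> sh sT hs; apply/seteqP; split => w /=.
  move/(hist_char _ _ _ sh) => H [|v] /=; rewrite mem_filter mem_iota //.
  case/andP => vs /andP[_ vT]; have := H v vT; rewrite /alpha' (negbTE vs).
  by rewrite /Bset /=.
move=> H; apply/(hist_char _ _ _ sh) => v vT; rewrite /alpha'.
case: eqP => [[->]|/eqP ne]; first by rewrite hs (andP (p01 s.+1 w)).2.
have := H v.+1; rewrite /= mem_filter mem_iota ne /= add1n ltnS vT.
by move/(_ isT).
Qed.

Lemma measB h u : measurable (Bset h u).
Proof.
exact: (@meas_le _ _ _ (fun _ (x : R) => x) (fun _ => @measurable_id _ _ setT) u).
Qed.

Lemma K6 T h : size h = T -> (s < T)%N -> nth false h s ->
  Pr P p alphat T h <= alphat s.+1 (take s h) * Pr P p alpha' T h.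
Proof.
move=> sh sT hs; set c := alphat s.+1 (take s h).
have c0 : 0 <= c by apply: a0; rewrite size_take sh sT.
rewrite /Pr K5a // K5b //.
have mA : measurable [set x : R | x <= c].
  have := measurable_fun_le measurableT (@measurable_id _ _ setT) (measurable_cst c).
  by rewrite setTI.
have -> := ind (S := Sseq T) (B := Bset h) _ mA (measB h); last first.
  by rewrite mem_filter eqxx.
have mI : measurable (\bigcap_(u in [set` Sseq T]) (p u @^-1` Bset h u)).
  rewrite -K5b //; exact: meas_A.
have mpA : measurable (p s.+1 @^-1` [set x : R | x <= c]).
  exact: (meas_le mp s.+1 c true).
rewrite fineM; first last.
- exact: fin_num_measure.
- exact: fin_num_measure.
apply: ler_wpM2r; first exact: fine_ge0.
have : (P (p s.+1 @^-1` [set x : R | (x <= c)%R]) <= c%:E)%E.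
  have [c1|c1] := leP c 1; first by apply: su; rewrite c0 c1.
  apply: le_trans (probability_le1 P mpA) _; rewrite lee_fin; exact: ltW.
move/fine_le => /= -> //; exact: fin_num_measure.
Qed.

Definition Rm (h : seq bool) : R := (maxn (count id h) 1)%:R.

Lemma Rm_gt0 h : 0 < Rm h.
Proof. by rewrite /Rm ltr0n leq_max orbT. Qed.

Lemma Kkey T (G : seq bool -> R) : (s < T)%N -> (forall x, 0 <= G x) ->
  Ex P p alphat T (fun h => (nth false h s)%:R * G (take s h) / Rm h)
  <= Ex P p alphat T (fun h => alphat s.+1 (take s h) * G (take s h) / Rm h).
Proof.
move=> sT G0.
have cpos (h : T.-tuple bool) : 0 <= alphat s.+1 (take s h).
  by apply: a0; rewrite size_take size_tuple sT.
apply: (@le_trans _ _ (Ex P p alpha' T (fun h => (nth false h s)%:R *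
   (alphat s.+1 (take s h) * G (take s h) / Rm h)))).
  rewrite /Ex; apply: ler_sum => h _.
  case hs: (nth false h s); last by rewrite !mul0r.
  have -> : true%:R = 1 :> R by [].
  rewrite !mul1r (_ : _ * Pr P p alpha' T h = G (take s h) / Rm h *
    (alphat s.+1 (take s h) * Pr P p alpha' T h)); last by ring.
  apply: ler_wpM2l.
    by rewrite mulr_ge0 ?G0 ?invr_ge0 ?ltW ?Rm_gt0.
  by apply: K6 => //; rewrite size_tuple.
apply: Ex_cmp => //.
- move=> h; apply: mulr_ge0; first by case: (nth _ _ _).
  by rewrite mulr_ge0 ?mulr_ge0 ?G0 ?cpos ?invr_ge0 ?ltW ?Rm_gt0.
- by move=> h; rewrite mulr_ge0 ?mulr_ge0 ?G0 ?cpos ?invr_ge0 ?ltW ?Rm_gt0.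
move=> w; rewrite K4 // mul1r.
have -> : take s (hist alpha' p w T) = take s (hist alphat p w T).
  by rewrite !hist_take ?(ltnW sT) // K1.
apply: ler_wpM2l.
  rewrite mulr_ge0 //; apply: a0; rewrite size_take size_hist sT //.
rewrite lef_pV2 ?posrE ?Rm_gt0 // /Rm ler_nat.
by rewrite geq_max leq_maxr andbT (leq_trans (count_hist_le (K2 _ _)) (leq_maxl _ _)).
Qed.

End K.



Section Main.
Variables (R : realType) (d : measure_display) (Omega : measurableType d).
Variables (P : probability Omega R) (p : nat -> Omega -> R) (H0 : pred nat).
Variables (alpha W0 : R) (alphat phi psi : nat -> seq bool -> R).
Hypothesis aI : 0 < alpha < 1.
Hypothesis W0I : 0 <= W0 <= alpha.
Hypothesis cons : forall w t, (0 < t)%N ->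
     let h := hist alphat p w t.-1 in
     0 <= phi t h /\ phi t h <= wealth alphat phi psi W0 p w t.-1 /\
     0 <= wealth alphat phi psi W0 p w t /\
     psi t h <= phi t h + bt alpha W0 (nrej alphat p w t.-1) /\
     (0 < alphat t h ->
        psi t h <= phi t h / alphat t h + bt alpha W0 (nrej alphat p w t.-1) - 1).

Notation hi w n := (hist alphat p w n).
Local Notation RM := (Rm R).
Definition D w s := (p s.+1 w <= alphat s.+1 (hi w s)).
Definition g s x := Num.max 0 (if 0 < alphat s.+1 x then phi s.+1 x / alphat s.+1 x
                               else phi s.+1 x + 1).
Definition B w n := if count id (hi w n) == 0%N then W0
                    else alpha * (count id (hi w n))%:R.

Lemma dec_D w s : dec alphat p w s.+1 = D w s.
Proof. by rewrite /dec [s.+1.-1]/= nth_hist. Qed.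

Lemma claim w n :
  wealth alphat phi psi W0 p w n + \sum_(s < n) (H0 s.+1)%:R * (D w s)%:R <=
  B w n + \sum_(s < n) (H0 s.+1)%:R *
     (- phi s.+1 (hi w s) + (D w s)%:R * g s (hi w s)).
Proof.
elim: n => [|n IH]; first by rewrite !big_ord0 /B /= !addr0.
rewrite !big_ord_recr /=.
have [ph0 [_ [_ [pb pa]]]] := cons w (ltn0Sn n).
rewrite /= in ph0 pb pa.
have hB : B w n.+1 = B w n + (D w n)%:R * bt alpha W0 (count id (hi w n)).
  rewrite /B /= -cats1 count_cat /= addn0 -/(D w n) /bt.
  case: (D w n); case: (count id (hi w n)) => [|c] /=;
    rewrite ?mulr0 ?addr0 ?mul1r ?addn0 ?addn1 //=; try lra.
rewrite hB dec_D.
set b := bt alpha W0 _ in pb pa hB *.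
set x := phi n.+1 _ in ph0 pb pa *; set y := psi n.+1 _ in pb pa *.
have gge : if 0 < alphat n.+1 (hi w n) then x / alphat n.+1 (hi w n) <= g n (hi w n)
           else x + 1 <= g n (hi w n).
  by rewrite /g -/x; case: ifP => H; rewrite ?H le_max lexx orbT.
suff: - x + (D w n)%:R * y + (H0 n.+1)%:R * (D w n)%:R <=
      (D w n)%:R * b + (H0 n.+1)%:R * (- x + (D w n)%:R * g n (hi w n)) by lra.
move: gge pa; case: (H0 n.+1); case: (D w n) => /=; rewrite ?mul1r ?mul0r;
  case: ifP => a0 gge pa; try lra.
Qed.

Fixpoint wealthH (h : seq bool) n : R :=
  match n with
  | 0 => W0
  | n'.+1 => wealthH h n' - phi n'.+1 (take n' h)
             + (nth false h n')%:R * psi n'.+1 (take n' h)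
  end.

Lemma wealthH_eq w n T : (n <= T)%N ->
  wealth alphat phi psi W0 p w n = wealthH (hi w T) n.
Proof.
elim: n => [//|n IH] nT /=; rewrite IH ?(ltnW nT) // hist_take ?(ltnW nT) //.
by rewrite dec_D nth_hist.
Qed.

Definition VH T (h : seq bool) : R := \sum_(s < T) (H0 s.+1)%:R * (nth false h s)%:R.
Definition Q T h := (VH T h + wealthH h T) / RM h.
Definition Y s h := (- phi s.+1 (take s h) + (nth false h s)%:R * g s (take s h)) / RM h.

Lemma nfalse_eq w T : (nfalse alphat p H0 w T)%:R = VH T (hi w T).
Proof.
rewrite /nfalse big_add1 /= big_mkord natr_sum /VH big_mkcond /=.
apply: eq_bigr => s _; rewrite dec_D nth_hist //.
by case: (H0 s.+1); rewrite ?mul1r ?mul0r.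
Qed.

Lemma wealth_ge0 w T : 0 <= wealth alphat phi psi W0 p w T.
Proof.
case: T => [|T]; first by case/andP: W0I.
by have [_ [_ [H _]]] := cons w (ltn0Sn T).
Qed.

Lemma VH_ge0 T h : 0 <= VH T h.
Proof. by apply: sumr_ge0 => s _; rewrite mulr_ge0. Qed.

Lemma f_eq w T : ((nfalse alphat p H0 w T)%:R + wealth alphat phi psi W0 p w T)
   / (maxn (nrej alphat p w T) 1)%:R = Q T (hi w T).
Proof. by rewrite nfalse_eq (wealthH_eq w (leqnn T)). Qed.

Lemma Q_ge0 w T : 0 <= Q T (hi w T).
Proof.
rewrite -f_eq; apply: mulr_ge0; last by rewrite invr_ge0.
by rewrite addr_ge0 ?wealth_ge0.
Qed.

Lemma bound w T : Q T (hi w T) <= alpha + \sum_(s < T | H0 s.+1) Y s (hi w T).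
Proof.
rewrite -f_eq nfalse_eq.
have := claim w T.
have -> : VH T (hi w T) = \sum_(s < T) (H0 s.+1)%:R * (D w s)%:R.
  by apply: eq_bigr => s _; rewrite nth_hist.
have -> : \sum_(s < T | H0 s.+1) Y s (hi w T) =
  (\sum_(s < T) (H0 s.+1)%:R * (- phi s.+1 (hi w s) + (D w s)%:R * g s (hi w s)))
   / RM (hi w T).
  rewrite big_mkcond /= mulr_suml; apply: eq_bigr => s _.
  rewrite /Y hist_take ?(ltnW (ltn_ord s)) // nth_hist //.
  by case: (H0 s.+1); rewrite ?mul1r ?mul0r.
set S := \sum_(s < T) _ * (- _ + _); set V := \sum_(s < T) _.
move=> HC.
have HB : B w T <= alpha * RM (hi w T).
  rewrite /B /Rm; case: eqP => [->|c0] /=; first by rewrite mulr1; case/andP: W0I.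
  by rewrite ler_wpM2l ?ler_nat ?leq_maxl //; case/andP: aI => /ltW.
have Rp := Rm_gt0 R (hi w T).
rewrite -/(RM (hi w T)) ler_pdivrMr // mulrDl divfK ?gt_eqF //.
rewrite addrC (addrC _ S); apply: le_trans HC _; lra.
Qed.

Lemma Ex_lin a T c (I : Type) (r : seq I) (Pr' : pred I) (F : I -> seq bool -> R) :
  Ex P p a T (fun h => c + \sum_(s <- r | Pr' s) F s h) =
  c * Ex P p a T (fun=> 1) + \sum_(s <- r | Pr' s) Ex P p a T (F s).
Proof.
rewrite /Ex; under eq_bigr do rewrite mulrDl big_distrl.
rewrite big_split /= big_distrr /=; congr (_ + _).
  by apply: eq_bigr => h _; rewrite mul1r.
by rewrite exchange_big.
Qed.

Lemma Ex_sub a T (F G : seq bool -> R) :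
  Ex P p a T (fun h => F h - G h) = Ex P p a T F - Ex P p a T G.
Proof.
rewrite /Ex -sumrB; apply: eq_bigr => h _; by rewrite mulrBl.
Qed.

Hypothesis mp : forall t, measurable_fun setT (p t).
Hypothesis p01 : forall t w, 0 <= p t w <= 1.
Hypothesis su : forall t, H0 t -> super_uniform P (p t).
Hypothesis ind : forall t, H0 t -> indep_from_others P p t.
Hypothesis a0 : forall t h, size h = t.-1 -> 0 <= alphat t h.
Hypothesis amono : forall t h h', size h = t.-1 -> hist_le h h' ->
  alphat t h <= alphat t h'.

Lemma mainEx T : Ex P p alphat T (fun h => Num.max (Q T h) 0) <= alpha.
Proof.
apply: le_trans (Ex_le P (G := fun h => alpha + \sum_(s < T | H0 s.+1) Y s h) _) _.
  by move=> w; rewrite max_l ?Q_ge0 //; exact: bound.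
rewrite Ex_lin (Ex_sum1 P mp) mulr1 -[X in _ <= X]addr0 lerD2l.
apply: sumr_le0 => s Hs.
rewrite (_ : Y s = fun h => (nth false h s)%:R * g s (take s h) / RM h -
                           phi s.+1 (take s h) / RM h); last first.
  by apply/funext => h; rewrite /Y mulrDl mulNr addrC.
rewrite Ex_sub subr_le0.
apply: le_trans (Kkey mp p01 a0 amono (su Hs) (ind Hs) (ltn_ord s) _) _.
  by move=> x; rewrite /g le_max lexx.
apply: (Ex_le P) => w.
rewrite hist_take ?(ltnW (ltn_ord s)) //.
have [ph0 _] := cons w (ltn0Sn s); rewrite /= in ph0.
apply: ler_wpM2r; first by rewrite invr_ge0 ltW // Rm_gt0.
have c0 : 0 <= alphat s.+1 (hi w s) by apply: a0; rewrite size_hist.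
rewrite /g; case: ifP => cp.
  by rewrite max_r ?divr_ge0 // mulrC divfK ?gt_eqF.
have -> : alphat s.+1 (hi w s) = 0 by apply/eqP; rewrite eq_le c0 andbT leNgt cp.
by rewrite mul0r.
Qed.

End Main.

Unset Implicit Arguments. Set Strict Implicit.


Theorem theorem1 (R : realType) (d : measure_display) (Omega : measurableType d)
  (P : probability Omega R) (p : nat -> Omega -> R) (H0 : pred nat)
  (alpha W0 : R) (alphat phi psi : nat -> seq bool -> R) :
  0 < alpha < 1 -> 0 <= W0 <= alpha ->
  (forall t, measurable_fun setT (p t)) ->
  (forall t w, 0 <= p t w <= 1) ->
  (forall t, H0 t -> super_uniform P (p t)) ->
  (forall t, H0 t -> indep_from_others P p t) ->
  (forall t h, size h = t.-1 -> 0 <= alphat t h) ->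
  (forall t h h', size h = t.-1 -> hist_le h h' -> alphat t h <= alphat t h') ->
  (forall w t, (0 < t)%N ->
     let h := hist alphat p w t.-1 in
     0 <= phi t h /\ phi t h <= wealth alphat phi psi W0 p w t.-1 /\
     0 <= wealth alphat phi psi W0 p w t /\
     psi t h <= phi t h + bt alpha W0 (nrej alphat p w t.-1) /\
     (0 < alphat t h ->
        psi t h <= phi t h / alphat t h + bt alpha W0 (nrej alphat p w t.-1) - 1)) ->
  forall T : nat,
    ('E_P[fun w => (((nfalse alphat p H0 w T)%:R + wealth alphat phi psi W0 p w T)
                   / (maxn (nrej alphat p w T) 1)%:R)%R] <= alpha%:E)%E /\
    ('E_P[fun w => ((nfalse alphat p H0 w T)%:R
                   / (maxn (nrej alphat p w T) 1)%:R)%R] <= alpha%:E)%E.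
Proof.
move=> aI W0I mp p01 su ind a0 amono cons T.
have ME := mainEx aI W0I cons mp p01 su ind a0 amono T.
set F := fun h => Num.max (Q H0 W0 phi psi T h) 0.
have F0 (h : T.-tuple bool) : 0 <= F h by rewrite /F le_max lexx orbT.
have EF : ('E_P[fun w => (((nfalse alphat p H0 w T)%:R + wealth alphat phi psi W0 p w T)
                   / (maxn (nrej alphat p w T) 1)%:R)%R] = (Ex P p alphat T F)%:E)%E.
  rewrite unlock -(E_hist P mp alphat F0); apply: eq_integral => w _.
  by rewrite f_eq /F max_l // (Q_ge0 H0 W0I cons).
split; first by rewrite EF lee_fin.
set G := fun h => VH R H0 T h / Rm R h.
have G0 (h : T.-tuple bool) : 0 <= G h.
  by rewrite /G divr_ge0 ?VH_ge0 // ltW // Rm_gt0.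
rewrite unlock.
have -> : (\int[P]_w ((nfalse alphat p H0 w T)%:R
             / (maxn (nrej alphat p w T) 1)%:R)%:E =
           \int[P]_w (G (hist alphat p w T))%:E)%E.
  by apply: eq_integral => w _; rewrite nfalse_eq.
rewrite (E_hist P mp alphat G0) lee_fin; apply: le_trans ME.
apply: (Ex_le P) => w.
rewrite /F /G max_l ?(Q_ge0 H0 W0I cons) // /Q.
apply: ler_wpM2r; first by rewrite invr_ge0 ltW // Rm_gt0.
rewrite lerDl -(wealthH_eq _ _ _ _ _ _ (leqnn T)).
exact: (wealth_ge0 W0I cons).
Qed.
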